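(* Let $m\ge 1$ and let $s_1,\dots,s_{2m}$ be positive integers. Put $S=\sum_{i=1}^{2m}s_i$, $s_{\max}=\max_i s_i$, $M=S+1$, $d_i=s_{\max}-s_i$, and $\epsilon=\frac{1}{2M}$. Let $$P_R=\Big\{x\in\mathbb{R}^{2m}:\ 0\le x_i\le 1\ \forall i,\ \sum_{i=1}^{2m}(M+s_i)x_i\le \tfrac12 S+mM+\epsilon,\ \sum_{i=1}^{2m}(M+d_i)x_i\le \tfrac12\sum_{i=1}^{2m}d_i+mM+\epsilon\Big\}.$$ Suppose $\sum_{j=1}^{m}s_j=\frac S2$ (so that $\{s_1,\dots,s_m\}$ and $\{s_{m+1},\dots,s_{2m}\}$ form an exact partition). Let $v^*$ be a vertex of $P_R$ with exactly $2m-1$ coordinates in $\{0,1\}$, such that $\{j: v^*_j=1\}=\{1,\dots,m\}$ and whose unique fractional coordinate index $i$ (with $0<v^*_i<1$, necessarily $i\in\{m+1,\dots,2m\}$) satisfies $s_i=\frac{s_{\max}}{2}$. Then $v^*$ is degenerate: both knapsack inequalities are active at $v^*$ in addition to $2m-1$ box constraints, so $2m+1$ defining inequalities are active at $v^*$.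
   Context: The inequalities $0\le x_i\le1$ are the box constraints; the other two inequalities are the knapsack constraints. A vertex of $P_R$ is degenerate if more than $2m$ of the $4m+2$ defining inequalities are active at it. *)

(* Defs.v *)
From mathcomp Require Import all_boot all_order all_algebra.
From mathcomp Require Import reals.
Set Implicit Arguments. Unset Strict Implicit. Unset Printing Implicit Defensive.
Import Order.TTheory GRing.Theory Num.Theory.
Local Open Scope ring_scope.

(* Indices 1..2m of the paper are the ordinals 0..2m-1 of 'I_(2*m);
   paper index j in {1..m} corresponds to ordinal j-1 < m. *)

Section Knapsack.
Variables (R : realType) (m : nat) (s : 'I_(2 * m) -> nat).

Definition Ssum : nat := (\sum_(i < 2 * m) s i)%N.
Definition smax : nat := (\max_(i < 2 * m) s i)%N.
Definition Mbig : R := (Ssum + 1)%:R.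
(* d_i = s_max - s_i  (nonnegative, since s_i <= s_max) *)
Definition dd (i : 'I_(2 * m)) : nat := (smax - s i)%N.
Definition eps : R := 1 / (2 * Mbig).

Definition knap1_lhs (x : 'I_(2 * m) -> R) : R :=
  \sum_(i < 2 * m) (Mbig + (s i)%:R) * x i.
Definition knap1_rhs : R := (Ssum%:R) / 2 + m%:R * Mbig + eps.
Definition knap2_lhs (x : 'I_(2 * m) -> R) : R :=
  \sum_(i < 2 * m) (Mbig + (dd i)%:R) * x i.
Definition knap2_rhs : R :=
  (\sum_(i < 2 * m) (dd i)%:R) / 2 + m%:R * Mbig + eps.

Definition inPR (x : 'I_(2 * m) -> R) : Prop :=
  (forall i, 0 <= x i /\ x i <= 1) /\
  knap1_lhs x <= knap1_rhs /\ knap2_lhs x <= knap2_rhs.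

Definition is_vertex (x : 'I_(2 * m) -> R) : Prop :=
  inPR x /\
  forall (y z : 'I_(2 * m) -> R) (t : R),
    inPR y -> inPR z -> 0 < t -> t < 1 ->
    (forall i, x i = t * y i + (1 - t) * z i) ->
    forall i, y i = z i.

Definition n_active (x : 'I_(2 * m) -> R) : nat :=
  (#|[set i : 'I_(2 * m) | x i == 0%R]| + #|[set i : 'I_(2 * m) | x i == 1%R]|
   + (knap1_lhs x == knap1_rhs) + (knap2_lhs x == knap2_rhs))%N.

Definition degenerate (x : 'I_(2 * m) -> R) : Prop :=
  is_vertex x /\ (2 * m < n_active x)%N.

End Knapsack.

(* Main.v *)
Require Import Defs.
From mathcomp Require Import all_boot all_order all_algebra.
From mathcomp Require Import reals.
From mathcomp Require Import ring lra zify.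
Import Order.TTheory GRing.Theory Num.Theory.
Local Open Scope ring_scope.

Lemma sumv (R : realType) n m (i0 : 'I_n) (t : R) (v : 'I_n -> R) (a : 'I_n -> R) :
  (m <= i0)%N -> (forall j : 'I_n, v j = if (j < m)%N then 1 else if j == i0 then t else 0) ->
  \sum_(j : 'I_n) a j * v j = \sum_(j : 'I_n | (j < m)%N) a j + a i0 * t.
Proof.
move=> hi hv; rewrite (bigID (fun j : 'I_n => (j < m)%N)) /=; congr (_ + _).
  by apply: eq_bigr => j hj; rewrite hv hj mulr1.
rewrite (bigD1 i0) /=; last by rewrite -leqNgt.
rewrite hv ltnNge hi eqxx /= big1 ?addr0 // => j /andP[hj hne].
by rewrite hv (negbTE hj) (negbTE hne) mulr0.
Qed.

Lemma cnt (R : realType) m : \sum_(j < 2 * m | (j < m)%N) (1 : R) = m%:R.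
Proof.
have h : (m <= 2 * m)%N by rewrite leq_pmull.
by rewrite (big_ord_narrow h) sumr_const card_ord.
Qed.

Theorem theorem1 (R : realType) (m : nat) (hm : (1 <= m)%N)
  (s : 'I_(2 * m) -> nat) (hs : forall i, (0 < s i)%N)
  (hpart : (2 * (\sum_(j < 2 * m | (j < m)%N) s j) = Ssum s)%N)
  (v : 'I_(2 * m) -> R) (hv : is_vertex s v)
  (h01 : #|[set i : 'I_(2 * m) | (v i == 0%R) || (v i == 1%R)]| = (2 * m - 1)%N)
  (hones : [set j : 'I_(2 * m) | v j == 1%R] = [set j : 'I_(2 * m) | (j < m)%N])
  (hfrac : forall i : 'I_(2 * m), 0 < v i -> v i < 1 -> (2 * s i = smax s)%N) :
  knap1_lhs s v = knap1_rhs R s /\ knap2_lhs s v = knap2_rhs R s /\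
  n_active s v = (2 * m + 1)%N /\ degenerate s v.
Proof.
have h01b := h01.
set A := [set i : 'I_(2 * m) | (v i == 0%R) || (v i == 1%R)] in h01b *.
have hC : #|~: A| = 1%N.
  by rewrite cardsCs setCK card_ord h01b; lia.
have [i0 hi0] : exists i0, ~: A = [set i0] by apply/cards1P; rewrite hC.
have inA j : j != i0 -> (v j == 0) || (v j == 1).
  move=> hj; have : j \notin ~: A by rewrite hi0 in_set1.
  by rewrite in_setC negbK inE.
have ni0 : ~~ ((v i0 == 0) || (v i0 == 1)).
  have : i0 \in ~: A by rewrite hi0 in_set1.
  by rewrite in_setC inE.
move: ni0; rewrite negb_or => /andP[n0 n1].
have [hbox _] := hv.1.
have [b0 b1] := hbox i0.
set t := v i0.
have t0 : 0 < t by rewrite lt_def n0 b0.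
have t1 : t < 1 by rewrite lt_def eq_sym n1 b1.
have one j : (v j == 1) = (j < m)%N.
  by have := congr1 (fun S : {set 'I_(2 * m)} => j \in S) hones; rewrite /= !inE.
have mi0 : (m <= i0)%N by rewrite leqNgt -one.
have hform : forall j, v j = if (j < m)%N then 1 else if j == i0 then t else 0.
  move=> j; case: ifP => hj; first by apply/eqP; rewrite one.
  case: eqP => [->//|/eqP hne].
  by move: (inA j hne); rewrite one hj orbF => /eqP.
have h2 := hfrac i0 t0 t1.
set M := Mbig R s.
set c : R := (s i0)%:R.
set sm : R := (smax s)%:R.
set P : R := \sum_(j < 2 * m | (j < m)%N) (s j)%:R.
have Mpos : 0 < M by rewrite /M /Mbig ltr0n addn1.
have epos : 0 < eps R s by rewrite /eps divr_gt0 // mulr_gt0.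
have hP : 2 * P = (Ssum s)%:R by rewrite /P -natr_sum -hpart natrM.
have hsm : sm = 2 * c by rewrite /sm /c -h2 natrM.
have sle j : (s j <= smax s)%N by apply: leq_bigmax.
have hdd j : ((dd s j)%:R : R) = sm - (s j)%:R by rewrite /dd natrB.
have sumdd : \sum_(j < 2 * m) ((dd s j)%:R : R) = 2 * m%:R * sm - (Ssum s)%:R.
  under eq_bigr do rewrite hdd.
  by rewrite sumrB sumr_const card_ord /Ssum natr_sum -[sm *+ _]mulr_natl natrM.
have sumdd1 : \sum_(j < 2 * m | (j < m)%N) ((dd s j)%:R : R) = m%:R * sm - P.
  under eq_bigr do rewrite hdd.
  rewrite sumrB -(cnt R m) mulr_suml; congr (_ - _).
  by apply: eq_bigr => j _; rewrite mul1r.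
have sumM : forall F : 'I_(2 * m) -> R,
   \sum_(j < 2 * m | (j < m)%N) (M + F j) = m%:R * M + \sum_(j < 2 * m | (j < m)%N) F j.
  move=> F; rewrite big_split /= -(cnt R m) mulr_suml; congr (_ + _).
  by apply: eq_bigr => j _; rewrite mul1r.
have K1 : forall (x : 'I_(2 * m) -> R) (u : R), (forall j : 'I_(2 * m), x j = if (j < m)%N then 1 else if j == i0 then u else 0) ->
    knap1_lhs s x - knap1_rhs R s = (M + c) * u - eps R s.
  move=> x u hx; rewrite /knap1_lhs (@sumv _ _ _ _ _ _ _ mi0 hx) sumM /knap1_rhs -/M -/c -/P.
  rewrite -hP; lra.
have K2 : forall (x : 'I_(2 * m) -> R) (u : R), (forall j : 'I_(2 * m), x j = if (j < m)%N then 1 else if j == i0 then u else 0) ->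
    knap2_lhs s x - knap2_rhs R s = (M + c) * u - eps R s.
  move=> x u hx; rewrite /knap2_lhs (@sumv _ _ _ _ _ _ _ mi0 hx) sumM /knap2_rhs -/M sumdd sumdd1 hdd -/c.
  rewrite -hP hsm; lra.
have inPR_of : forall (x : 'I_(2 * m) -> R) (u : R), (forall j : 'I_(2 * m), x j = if (j < m)%N then 1 else if j == i0 then u else 0) ->
    0 <= u -> u <= 1 -> (M + c) * u <= eps R s -> inPR s x.
  move=> x u hx u0 u1 hu; split; last first.
    by split; rewrite -subr_le0 ?(K1 _ _ hx) ?(K2 _ _ hx) subr_le0.
  move=> j; rewrite hx; case: ifP => _; first by rewrite ler01 lexx.
  by case: ifP => _; rewrite ?lexx ?ler01 ?u0 ?u1.
have tight : (M + c) * t = eps R s.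
  have hle : (M + c) * t <= eps R s.
    by rewrite -subr_le0 -(K1 _ _ hform) subr_le0; case: hv => [[_ []]].
  apply/eqP; rewrite eq_le hle /=; rewrite leNgt; apply/negP => hlt.
  have Kpos : 0 < M + c by rewrite ltr_wpDr // /c ler0n.
  set g := (eps R s - (M + c) * t) / (M + c).
  have gpos : 0 < g by rewrite divr_gt0 // subr_gt0.
  have hg : (M + c) * g = eps R s - (M + c) * t by rewrite /g mulrC divfK // gt_eqF.
  set d := Num.min t (Num.min (1 - t) g).
  have dpos : 0 < d by rewrite !lt_min t0 gpos subr_gt0 t1.
  have dt : d <= t by rewrite ge_min lexx.
  have d1 : d <= 1 - t by rewrite ge_min ge_min lexx orbT.
  have dg : d <= g by rewrite ge_min ge_min lexx !orbT.
  have Kd : (M + c) * d <= (M + c) * g by rewrite ler_pM2l.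
  pose y := fun j : 'I_(2 * m) => if (j < m)%N then 1 else if j == i0 then t + d else 0.
  pose z := fun j : 'I_(2 * m) => if (j < m)%N then 1 else if j == i0 then t - d else 0.
  have hy : inPR s y.
    apply: (inPR_of y (t + d)) => //; [lra | lra | ].
    rewrite mulrDr; lra.
  have hz : inPR s z.
    apply: (inPR_of z (t - d)) => //; [lra | lra | ].
    rewrite mulrBr; have : 0 <= (M + c) * d by rewrite mulr_ge0 // ltW.
    lra.
  have := hv.2 y z (1/2) hy hz.
  have h12 : (0 : R) < 1/2 by lra.
  have h12' : (1 : R)/2 < 1 by lra.
  move=> /(_ h12 h12') H.
  have e : forall j, v j = 1/2 * y j + (1 - 1/2) * z j.
    move=> j; rewrite hform /y /z; case: ifP => _; first lra.
    case: ifP => _; lra.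
  have := H e i0; rewrite /y /z ltnNge mi0 eqxx /=; lra.
have k1 : knap1_lhs s v = knap1_rhs R s.
  by apply/eqP; rewrite -subr_eq0 (K1 _ _ hform) tight subrr.
have k2 : knap2_lhs s v = knap2_rhs R s.
  by apply/eqP; rewrite -subr_eq0 (K2 _ _ hform) tight subrr.
have hna : n_active s v = (2 * m + 1)%N.
  rewrite /n_active k1 k2 !eqxx /=.
  have hU : A = [set i | v i == 0] :|: [set i | v i == 1].
    by apply/setP => j; rewrite !inE.
  have hI : [set i | v i == 0] :&: [set i | v i == 1] = set0.
    apply/setP => j; rewrite !inE; apply/negbTE; apply/andP => -[/eqP -> ].
    by rewrite eq_sym oner_eq0.
  have := cardsUI [set i | v i == 0] [set i | v i == 1].
  rewrite -hU hI cards0 h01b; move=> HH.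
  rewrite -addnA -HH; lia.
split; first exact: k1.
split; first exact: k2.
split; first exact: hna.
by split => //; rewrite hna addn1.
Qed.
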